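(* Let $\mathcal A\in\mathbb C^{n_1\times n_1\times n_3}$ with $\mathrm{ind}(\mathcal A)=k$, let $\mathcal A^-$ be a fixed element of $\mathcal A\{1\}$, and let $\mathcal X\in\mathbb C^{n_1\times n_1\times n_3}$. The following are equivalent: (a) $\mathcal X=\mathcal A^{-,D}$; (b) $\mathcal X\mathcal A\mathcal X=\mathcal X$, $\mathcal X\mathcal A^k=\mathcal A^-\mathcal A^k$, $\mathcal A\mathcal X\mathcal A=\mathcal A\mathcal A^D\mathcal A$ and $\mathcal A\mathcal X=\mathcal A\mathcal A^D$; (c) $\mathcal A^-\mathcal A\mathcal X=\mathcal X$, $\mathcal X\mathcal A^k=\mathcal A^-\mathcal A^k$ and $\mathcal X=\mathcal X\mathcal A\mathcal A^D$; (d) $\mathcal A^-\mathcal A\mathcal X\mathcal A\mathcal A^D=\mathcal X$ and $\mathcal A\mathcal X\mathcal A^k=\mathcal A^k$; (e) $\mathcal A^-\mathcal A\mathcal A^D\mathcal A=\mathcal X\mathcal A$, $\mathcal A^k\mathcal X=\mathcal A^k\mathcal A^D$ and $\mathcal X=\mathcal X\mathcal A\mathcal A^D$.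
   Context: Fix a nonsingular matrix $M\in\mathbb C^{n_3\times n_3}$. For $\mathcal C\in\mathbb C^{n_1\times n_2\times n_3}$ let $\widehat{\mathcal C}=\mathcal C\times_3M$, i.e. $\widehat{\mathcal C}_{ijk}=\sum_{l=1}^{n_3}M_{kl}\mathcal C_{ijl}$, and let $\widehat{\mathcal C}^{(i)}$ denote its $i$-th frontal slice. The M-product $\mathcal C\star_M\mathcal D$ of $\mathcal C\in\mathbb C^{n_1\times n_2\times n_3}$ and $\mathcal D\in\mathbb C^{n_2\times l\times n_3}$ is the unique tensor with $\widehat{\mathcal C\star_M\mathcal D}^{(i)}=\widehat{\mathcal C}^{(i)}\widehat{\mathcal D}^{(i)}$ for all $i\in[n_3]$. Juxtaposition of tensors denotes the M-product; powers are M-product powers with $\mathcal A^0=\mathcal I$ where $\widehat{\mathcal I}^{(i)}=I_{n_1}$. $\mathcal A\{1\}$ is the set of all $\mathcal W$ with $\mathcal A\mathcal W\mathcal A=\mathcal A$. The index $\mathrm{ind}(\mathcal A)$ is $\max_{i}\mathrm{ind}(\widehat{\mathcal A}^{(i)})$, where the index of a square matrix $B$ is the least $k\ge0$ with $\mathrm{rank}(B^{k+1})=\mathrm{rank}(B^k)$. For $\mathrm{ind}(\mathcal A)=k$, the Drazin inverse $\mathcal A^D$ is the unique $\mathcal W$ with $\mathcal W\mathcal A^{k+1}=\mathcal A^k$, $\mathcal W\mathcal A\mathcal W=\mathcal W$, $\mathcal A\mathcal W=\mathcal W\mathcal A$. The 1-D inverse is $\mathcal A^{-,D}=\mathcal A^-\mathcal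 A\mathcal A^D$. *)

(* Defs.v *)
From HB Require Import structures.
From mathcomp Require Import all_boot all_order all_algebra.
From mathcomp Require Import reals.
From mathcomp.real_closed Require Import complex.
Set Implicit Arguments. Unset Strict Implicit. Unset Printing Implicit Defensive.
Import Order.TTheory GRing.Theory Num.Theory.
Local Open Scope ring_scope.

(* A third-order tensor in C^{n1 x n2 x n3}, stored by frontal slices. *)
Definition tensor (C : Type) (n1 n2 n3 : nat) := {ffun 'I_n3 -> 'M[C]_(n1, n2)}.

Section MProduct.
Variable C : fieldType.
Variable n3 : nat.
Variable M : 'M[C]_n3.

Definition thm_hat n1 n2 (T : tensor C n1 n2 n3) : tensor C n1 n2 n3 :=
  [ffun k => \sum_(l < n3) M k l *: T l].

Definition thm_unhat n1 n2 (T : tensor C n1 n2 n3) : tensor C n1 n2 n3 :=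
  [ffun k => \sum_(l < n3) invmx M k l *: T l].

Definition mprod n1 n2 l (A : tensor C n1 n2 n3) (B : tensor C n2 l n3)
  : tensor C n1 l n3 :=
  thm_unhat [ffun i => thm_hat A i *m thm_hat B i].

Definition mid n1 : tensor C n1 n1 n3 := thm_unhat [ffun _ => 1%:M].

Definition mpow n1 (A : tensor C n1 n1 n3) (k : nat) : tensor C n1 n1 n3 :=
  iter k (mprod A) (mid n1).

End MProduct.

Definition mxpow (C : fieldType) n (B : 'M[C]_n) (k : nat) : 'M[C]_n :=
  iter k (mulmx B) 1%:M.

Definition is_mx_index (C : fieldType) n (B : 'M[C]_n) (k : nat) : Prop :=
  \rank (mxpow B k.+1) = \rank (mxpow B k) /\
  (forall j, (j < k)%N -> \rank (mxpow B j.+1) <> \rank (mxpow B j)).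

(* ind(A) = k : k is the maximum over i of ind(hat A^(i)) *)
Definition is_tensor_index (C : fieldType) n1 n3 (M : 'M[C]_n3)
  (A : tensor C n1 n1 n3) (k : nat) : Prop :=
  (forall i, exists2 ki, is_mx_index (thm_hat M A i) ki & (ki <= k)%N) /\
  ((0 < n3)%N -> exists i, is_mx_index (thm_hat M A i) k) /\
  (n3 = 0%N -> k = 0%N).

(* Main.v *)
Require Import Defs.
From HB Require Import structures.
From mathcomp Require Import all_boot all_order all_algebra.
From mathcomp Require Import reals.
From mathcomp.real_closed Require Import complex.
Set Warnings "-notation-overridden,-ambiguous-paths".
Set Implicit Arguments. Unset Strict Implicit.
Import GRing.Theory.
Local Open Scope ring_scope.

Section Alg.
Variable C : fieldType.
Variable n3 : nat.
Variable M : 'M[C]_n3.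
Hypothesis hM : M \in unitmx.

Lemma sum_id n1 n2 (T : tensor C n1 n2 n3) (P : 'M[C]_n3) k :
  P = 1%:M -> \sum_(m < n3) P k m *: T m = T k.
Proof.
move=> ->; rewrite (bigD1 k) //= big1 ?addr0; first by rewrite mxE eqxx scale1r.
by move=> m nmk; rewrite mxE eq_sym (negbTE nmk) scale0r.
Qed.

Lemma hat_unhat n1 n2 (T : tensor C n1 n2 n3) : thm_hat M (thm_unhat M T) = T.
Proof.
apply/ffunP => k; rewrite !ffunE.
under eq_bigr => l _ do rewrite ffunE scaler_sumr.
rewrite exchange_big /=.
rewrite -(@sum_id _ _ T _ k (mulmxV hM)); apply: eq_bigr => m _.
by rewrite mxE scaler_suml; apply: eq_bigr => l _; rewrite scalerA.
Qed.

Lemma unhat_hat n1 n2 (T : tensor C n1 n2 n3) : thm_unhat M (thm_hat M T) = T.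
Proof.
apply/ffunP => k; rewrite !ffunE.
under eq_bigr => l _ do rewrite ffunE scaler_sumr.
rewrite exchange_big /=.
rewrite -(@sum_id _ _ T _ k (mulVmx hM)); apply: eq_bigr => m _.
by rewrite mxE scaler_suml; apply: eq_bigr => l _; rewrite scalerA.
Qed.

Lemma hat_inj n1 n2 (S T : tensor C n1 n2 n3) : thm_hat M S = thm_hat M T -> S = T.
Proof. by move=> h; rewrite -(unhat_hat S) h unhat_hat. Qed.

Lemma hat_mprod n1 n2 l (A : tensor C n1 n2 n3) (B : tensor C n2 l n3) i :
  thm_hat M (mprod M A B) i = thm_hat M A i *m thm_hat M B i.
Proof. by rewrite /mprod hat_unhat ffunE. Qed.

Lemma mpA n1 n2 n4 n5 (A : tensor C n1 n2 n3) (B : tensor C n2 n4 n3)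
  (D : tensor C n4 n5 n3) : mprod M (mprod M A B) D = mprod M A (mprod M B D).
Proof. by apply: hat_inj; apply/ffunP => i; rewrite !hat_mprod mulmxA. Qed.

Lemma mp1l n1 n2 (A : tensor C n1 n2 n3) : mprod M (mid M n1) A = A.
Proof. by apply: hat_inj; apply/ffunP => i; rewrite hat_mprod /mid hat_unhat ffunE mul1mx. Qed.

Lemma mp1r n1 n2 (A : tensor C n1 n2 n3) : mprod M A (mid M n2) = A.
Proof. by apply: hat_inj; apply/ffunP => i; rewrite hat_mprod /mid hat_unhat [X in _ *m X]ffunE mulmx1. Qed.

End Alg.

Section Abs.
Variable T : Type.
Variable mul : T -> T -> T.
Variable one : T.
Hypothesis mpA : forall x y z, mul (mul x y) z = mul x (mul y z).
Hypothesis mp1l : forall x, mul one x = x.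
Hypothesis mp1r : forall x, mul x one = x.
Local Notation "x ** y" := (mul x y) (at level 40, left associativity).
Local Notation mpow := (fun a j => iter j (mul a) one).

Variables (a d g x : T) (k : nat).
Hypothesis H1 : d ** mpow a k.+1 = mpow a k.
Hypothesis H2 : d ** a ** d = d.
Hypothesis H3 : a ** d = d ** a.
Hypothesis H4 : a ** g ** a = a.

Local Notation P := (mpow a).
Local Notation Q := (mpow d).

Lemma H1' : d ** (a ** P k) = P k. Proof. exact: H1. Qed.
Lemma H2' : d ** (a ** d) = d. Proof. by rewrite -mpA. Qed.
Lemma H4' (Z : T) : a ** (g ** (a ** Z)) = a ** Z. Proof. by rewrite -!mpA H4. Qed.

Lemma comm_pow j : d ** P j = P j ** d.
Proof.
elim: j => [|j IH]; first by rewrite /= mp1l mp1r.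
rewrite /= -mpA -H3 !mpA IH; by rewrite -mpA.
Qed.

Lemma Pcomm j : P j ** a = a ** P j.
Proof.
elim: j => [|j IH]; first by rewrite /= mp1l mp1r.
by rewrite /= mpA IH.
Qed.

Lemma F1 : a ** (d ** P k) = P k.
Proof. by rewrite -mpA H3 mpA H1'. Qed.

Lemma F2 : P k ** (d ** a) = P k.
Proof.
rewrite -H3 -mpA Pcomm.
have -> : a ** P k = P k.+1 by [].
by rewrite -comm_pow H1.
Qed.

Lemma E : P k ** Q k = a ** d.
Proof.
case: k H1 => [|k'] h.
  rewrite /= mp1l.
  have : d ** (a ** one) = one := h.
  by rewrite mp1r H3 => ->.
have gen : forall j, P j.+1 ** Q j.+1 = a ** d.
  elim=> [|j IH]; first by rewrite /= !mp1r.
  rewrite [P _]/= [Q j.+2]/= !mpA -(mpA (P j) d) -comm_pow mpA -(mpA a d) H3 mpA -(mpA a (P j)) IH H2' //.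


exact: gen.
Qed.

Definition x0 := g ** a ** d.

Lemma eqb : (x = x0) <-> [/\ x ** a ** x = x, x ** P k = g ** P k,
            a ** x ** a = a ** d ** a & a ** x = a ** d].
Proof.
split.
  move=> ->; rewrite /x0 !mpA; split.
  - by rewrite H4' H2'.
  - by rewrite F1.
  - by rewrite H4'.
  - by rewrite H4'.
case=> h1 h2 _ h4; rewrite /x0 -h1 mpA h4 -E -mpA h2 mpA E mpA //.
Qed.

Lemma eqc : (x = x0) <-> [/\ g ** a ** x = x, x ** P k = g ** P k & x = x ** a ** d].
Proof.
split.
  move=> ->; rewrite /x0 !mpA; split.
  - by rewrite H4'.
  - by rewrite F1.
  - by rewrite H2'.
case=> _ h2 h3; by rewrite /x0 h3 mpA -E -mpA h2 mpA E mpA.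
Qed.

Lemma eqd : (x = x0) <-> (g ** a ** x ** a ** d = x /\ a ** x ** P k = P k).
Proof.
split.
  move=> ->; rewrite /x0 !mpA; split.
  - by rewrite H4' H2'.
  - by rewrite H4' F1.
case=> h1 h2; rewrite mpA in h2; by rewrite -h1 /x0 !mpA -E -(mpA x) -(mpA a) h2.
Qed.

Lemma eqe : (x = x0) <-> [/\ g ** a ** d ** a = x ** a, P k ** x = P k ** d
          & x = x ** a ** d].
Proof.
split.
  move=> ->; rewrite /x0 !mpA; split.
  - by [].
  - by rewrite -{1}F2 !mpA H4' H2'.
  - by rewrite H2'.
case=> h1 _ h3; by rewrite h3 -h1 /x0 !mpA H2'.
Qed.

End Abs.

Unset Implicit Arguments. Set Strict Implicit.

Local Open Scope ring_scope.
Local Open Scope complex_scope.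

Theorem theorem3p7 (R : realType) (n1 n3 : nat) (M : 'M[R[i]]_n3)
  (hM : M \in unitmx) (A : tensor R[i] n1 n1 n3) (k : nat)
  (hk : is_tensor_index M A k)
  (AD : tensor R[i] n1 n1 n3)
  (hAD1 : mprod M AD (mpow M A k.+1) = mpow M A k)
  (hAD2 : mprod M (mprod M AD A) AD = AD)
  (hAD3 : mprod M A AD = mprod M AD A)
  (Am : tensor R[i] n1 n1 n3)
  (hAm : mprod M (mprod M A Am) A = A)
  (X : tensor R[i] n1 n1 n3) :
  let mp := @mprod _ _ M n1 n1 n1 in
  let Ak := mpow M A k in
  [/\ (X = mp (mp Am A) AD) <->
        [/\ mp (mp X A) X = X, mp X Ak = mp Am Ak,
            mp (mp A X) A = mp (mp A AD) A & mp A X = mp A AD],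
      (X = mp (mp Am A) AD) <->
        [/\ mp (mp Am A) X = X, mp X Ak = mp Am Ak & X = mp (mp X A) AD],
      (X = mp (mp Am A) AD) <->
        (mp (mp (mp (mp Am A) X) A) AD = X /\ mp (mp A X) Ak = Ak) &
      (X = mp (mp Am A) AD) <->
        [/\ mp (mp (mp Am A) AD) A = mp X A, mp Ak X = mp Ak AD
          & X = mp (mp X A) AD]].
Proof.
move=> mp Ak; rewrite /mp /Ak.
have A1 := @mpA _ _ M hM n1 n1 n1 n1.
have L1 := @mp1l _ _ M hM n1 n1.
have R1 := @mp1r _ _ M hM n1 n1.
by split; [apply: (eqb A1 L1 R1) | apply: (eqc A1 L1 R1) | apply: (eqd A1 L1 R1) | apply: (eqe A1 L1 R1)].
Qed.
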